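(* Let $V$ be a finite-dimensional real vector space and $X\subseteq V$ a finite or countable set in which every $2$-dimensional linear subset has fundamental vectors, equipped with a suitable ordering $\gamma_1,\gamma_2,\ldots$ with initial segments $X_i=\{\gamma_1,\ldots,\gamma_i\}$. Let $X_m$ be an initial segment and let $U$ be biclosed in $X_m$. Let $\overline{U}$ be the closure of $U$ in $X$. Then $\overline{U}\cap X_m=U$.
   Context: $\mathrm{Span}_+$ denotes nonnegative linear combinations. For $Y\subseteq X$, $B\subseteq Y$: closed in $Y$ if $\alpha,\beta\in B$, $\gamma\in\mathrm{Span}_+(\alpha,\beta)\cap Y$ imply $\gamma\in B$; coclosed if $Y\setminus B$ closed; biclosed if both; weakly separable if $\mathrm{Span}_+(B)\cap\mathrm{Span}_+(Y\setminus B)=\{0\}$; $Y$ is clean if every biclosed subset of $Y$ is weakly separable in $Y$. The closure of $U$ in $X$ is the smallest closed subset of $X$ containing $U$. A linear subset is $X\cap L$ for a subspace $L$. A $2$-dimensional linear subset $Y$ has fundamental vectors $\alpha,\beta\in Y$ if $Y\subseteq\mathrm{Span}_+\{\alpha,\beta\}$ and neither $\alpha$ nor $\beta$ lies in the nonnegative span of the other elements of $Y$. $F\subseteq X$ is full if $F\cap\mathrm{Span}\{\alpha,\beta\}=X\cap\mathrm{Span}\{\alpha,\beta\}$ for all $\alpha,\beta\in F$. An ordering is suitable if (1) in every $2$-dimensional linear subset the fundamental vectors precede all its other vectors, and (2) for every $i$ and $\alpha,\beta,\gamma\in X_i$ there is a full $F\subseteq X$ containing them with $F\cap X_i$ clean.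 *)

(* Defs.v *)
(* V = 'rV[R]_n with R : realType (a finite-dimensional real
   vector space, up to isomorphism). Subsets of V are predicates V -> Prop. *)
From HB Require Import structures.
From mathcomp Require Import all_boot all_order all_algebra.
From mathcomp Require Import reals.
Set Implicit Arguments. Unset Strict Implicit. Unset Printing Implicit Defensive.
Import Order.TTheory GRing.Theory Num.Theory.
Local Open Scope ring_scope.

Section Defs.
Variables (R : realType) (n : nat).
Notation V := 'rV[R]_n.

Definition pspan (B : V -> Prop) (v : V) : Prop :=
  exists (k : nat) (w : 'I_k -> V) (c : 'I_k -> R),
    (forall i, B (w i)) /\ (forall i, 0 <= c i) /\ v = \sum_(i < k) c i *: w i.

Definition pspan2 (a b v : V) : Prop :=
  exists c d : R, 0 <= c /\ 0 <= d /\ v = c *: a + d *: b.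

Definition lspan2 (a b : V) : {vspace V} := (<[a]> + <[b]>)%VS.

Definition subsetP (B Y : V -> Prop) := forall v, B v -> Y v.
Definition setDP (Y B : V -> Prop) (v : V) := Y v /\ ~ B v.

Definition closed_in (Y B : V -> Prop) : Prop :=
  subsetP B Y /\
  forall a b g, B a -> B b -> Y g -> pspan2 a b g -> B g.
Definition coclosed_in (Y B : V -> Prop) : Prop :=
  subsetP B Y /\ closed_in Y (setDP Y B).
Definition biclosed_in (Y B : V -> Prop) : Prop :=
  closed_in Y B /\ coclosed_in Y B.

Definition weakly_separable_in (Y B : V -> Prop) : Prop :=
  forall v, pspan B v -> pspan (setDP Y B) v -> v = 0.

Definition clean (Y : V -> Prop) : Prop :=
  forall B, biclosed_in Y B -> weakly_separable_in Y B.

Definition closure_in (X U : V -> Prop) (v : V) : Prop :=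
  forall C, closed_in X C -> subsetP U C -> C v.

Definition lin2_subset (X Y : V -> Prop) : Prop :=
  exists a b, Y a /\ Y b /\ \dim (lspan2 a b) = 2%N /\
    forall v, Y v <-> (X v /\ v \in lspan2 a b).

Definition setD1P (Y : V -> Prop) (a v : V) := Y v /\ v <> a.

Definition fundamental (Y : V -> Prop) (a b : V) : Prop :=
  Y a /\ Y b /\ (forall v, Y v -> pspan2 a b v) /\
  ~ pspan (setD1P Y a) a /\ ~ pspan (setD1P Y b) b.

Definition full (X F : V -> Prop) : Prop :=
  subsetP F X /\
  forall a b, F a -> F b ->
    forall v, (F v /\ v \in lspan2 a b) <-> (X v /\ v \in lspan2 a b).

(* Enumerations: X = {gamma j | valid j}, with valid j := j < N if
   len = Some N (finite X), or always if len = None (countably infinite X).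
   Indices are 0-based: X_i = {gamma j | j < i}. *)
Definition valid (len : option nat) (j : nat) : bool :=
  if len is Some N then (j < N)%N else true.

Definition Xset (gamma : nat -> V) (len : option nat) (v : V) : Prop :=
  exists j, valid len j /\ v = gamma j.

Definition Xseg (gamma : nat -> V) (len : option nat) (i : nat) (v : V) : Prop :=
  exists j, valid len j /\ (j < i)%N /\ v = gamma j.

Definition suitable (gamma : nat -> V) (len : option nat) : Prop :=
  (forall Y, lin2_subset (Xset gamma len) Y ->
     forall i j k, valid len i -> valid len j -> valid len k ->
       fundamental Y (gamma i) (gamma j) -> Y (gamma k) ->
       gamma k <> gamma i -> gamma k <> gamma j ->
       (i < k)%N /\ (j < k)%N) /\
  (forall i a b c, Xseg gamma len i a -> Xseg gamma len i b -> Xseg gamma len i c ->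
     exists F, full (Xset gamma len) F /\ F a /\ F b /\ F c /\
       clean (fun v => F v /\ Xseg gamma len i v)).

End Defs.

(* Main.v *)
Require Import Defs.
From HB Require Import structures.
From mathcomp Require Import all_boot all_order all_algebra.
From mathcomp Require Import reals.
From mathcomp Require Import ring lra zify.
From Stdlib Require Import Classical.
Import Order.TTheory GRing.Theory Num.Theory.
Local Open Scope ring_scope.
Set Implicit Arguments. Unset Strict Implicit. Unset Printing Implicit Defensive.
Section Basic.
Variables (R : realType) (n : nat).
Local Notation V := 'rV[R]_n.
Implicit Types (a b g u v w : V) (B Y : V -> Prop).

Lemma pspan2_sym a b g : pspan2 a b g -> pspan2 b a g.
Proof. by case=> c [d [hc [hd ->]]]; exists d, c; rewrite addrC. Qed.

Lemma pspan2_scale a b g k : pspan2 a b g -> 0 <= k -> pspan2 a b (k *: g).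
Proof.
case=> c [d [hc [hd ->]]] hk; exists (k * c), (k * d).
by rewrite !mulr_ge0 // scalerDr !scalerA.
Qed.

Lemma pspan2_lin a b c d : 0 <= c -> 0 <= d -> pspan2 a b (c *: a + d *: b).
Proof. by move=> hc hd; exists c, d. Qed.

Lemma pspan2_l a b k : 0 <= k -> pspan2 a b (k *: a).
Proof. by move=> hk; exists k, 0; rewrite scale0r addr0. Qed.

Lemma pspan2_r a b k : 0 <= k -> pspan2 a b (k *: b).
Proof. by move=> hk; exists 0, k; rewrite scale0r add0r. Qed.

Lemma pspan2_0 a b : pspan2 a b 0.
Proof. by have := pspan2_l a b (lexx 0); rewrite scale0r. Qed.

Lemma pspan2_self a : pspan2 a a a.
Proof. by have := pspan2_l a a ler01; rewrite scale1r. Qed.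

Lemma pspan1 B a : B a -> pspan B a.
Proof.
move=> Ba; exists 1%N, (fun _ => a), (fun _ => 1); split=> //; split=> //.
by rewrite big_ord1 scale1r.
Qed.

Lemma pspan_comb B a b c d : pspan B a -> pspan B b -> 0 <= c -> 0 <= d ->
  pspan B (c *: a + d *: b).
Proof.
move=> [k1 [w1 [c1 [hw1 [hc1 ->]]]]] [k2 [w2 [c2 [hw2 [hc2 ->]]]]] hc hd.
exists (k1 + k2)%N.
exists (fun i => match split i with inl j => w1 j | inr j => w2 j end).
exists (fun i => match split i with inl j => c * c1 j | inr j => d * c2 j end).
split; first by move=> i; case: (split i).
split; first by move=> i; case: (split i) => j; apply: mulr_ge0.
rewrite big_split_ord /= !scaler_sumr; congr (_ + _); apply: eq_bigr => i _.
  by rewrite (unsplitK (inl i : 'I_k1 + 'I_k2)) scalerA.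
by rewrite (unsplitK (inr i : 'I_k1 + 'I_k2)) scalerA.
Qed.

Lemma pspan_of2 B a b g : B a -> B b -> pspan2 a b g -> pspan B g.
Proof.
move=> Ba Bb [c [d [hc [hd ->]]]]; apply: pspan_comb => //; exact: pspan1.
Qed.

Lemma lin_lspan2 a b x y : x *: a + y *: b \in lspan2 a b.
Proof. by apply: memv_add; rewrite memvZ // memv_line. Qed.

Lemma pspan2_lspan2 a b g : pspan2 a b g -> g \in lspan2 a b.
Proof. by case=> c [d [_ [_ ->]]]; apply: lin_lspan2. Qed.

Lemma lspan2_coords a b v : v \in lspan2 a b -> exists x y, v = x *: a + y *: b.
Proof.
case/memv_addP=> u /vlineP[x ->] [w /vlineP[y ->] ->]; by exists x, y.
Qed.

Lemma lspan2C a b : lspan2 a b = lspan2 b a.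
Proof. by rewrite /lspan2 addvC. Qed.

Lemma lspan2_swap a b c r s : s != 0 -> c = r *: a + s *: b -> b \in lspan2 c a.
Proof.
move=> hs hc.
have -> : b = s^-1 *: c + (- (s^-1 * r)) *: a.
  by rewrite hc scalerDr !scalerA mulVf // scale1r scaleNr addrC addKr.
exact: lin_lspan2.
Qed.

Lemma dim_lspan2 a b : b != 0 -> a \notin <[b]>%VS -> \dim (lspan2 a b) = 2%N.
Proof.
move=> hb ha.
have hf : free [:: a; b] by rewrite free_cons span_seq1 ha /= seq1_free.
have -> : lspan2 a b = <<[:: a; b]>>%VS by rewrite /lspan2 span_cons span_seq1.
exact: (eqP hf).
Qed.

Lemma dep_of_dim a b : b != 0 -> \dim (lspan2 a b) <> 2%N -> exists l, a = l *: b.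
Proof.
move=> hb hd; case: (boolP (a \in <[b]>%VS)) => [/vlineP //|ha].
by exfalso; apply: hd; apply: dim_lspan2.
Qed.

End Basic.
Section Geo.
Variables (R : realType) (n : nat).
Local Notation V := 'rV[R]_n.
Implicit Types (a b g u v w al be : V) (B Y : V -> Prop).

Lemma lcE (al be : V) (k1 k2 x1 y1 x2 y2 : R) :
  k1 *: (x1 *: al + y1 *: be) + k2 *: (x2 *: al + y2 *: be) =
  (k1 * x1 + k2 * x2) *: al + (k1 * y1 + k2 * y2) *: be.
Proof.
rewrite !scalerDr !scalerA !scalerDl.
by rewrite -!addrA; congr (_ + _); rewrite addrC -!addrA; congr (_ + _); rewrite addrC.
Qed.

Lemma lcE2 (al be : V) (c d x y : R) :
  c *: al + d *: (x *: al + y *: be) = (c + d * x) *: al + (d * y) *: be.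
Proof. by rewrite scalerDr !scalerA scalerDl addrA. Qed.

Lemma lc_eq (al be : V) (x1 y1 x2 y2 : R) : x1 = x2 -> y1 = y2 ->
  x1 *: al + y1 *: be = x2 *: al + y2 *: be.
Proof. by move=> -> ->. Qed.

Lemma pspan0 B : pspan B 0.
Proof.
exists 0%N, (fun _ => 0), (fun _ => 0).
split; first by move=> [] //. split=> //. by rewrite big_ord0.
Qed.

Lemma fund_nz Y al be : fundamental Y al be -> al <> 0 /\ be <> 0.
Proof.
case=> _ [_ [_ [h1 h2]]]; split=> h0.
  by apply: h1; rewrite h0; apply: pspan0.
by apply: h2; rewrite h0; apply: pspan0.
Qed.

Lemma pspan_scale1 B y k : B y -> pspan B (k *: y) \/ k < 0.
Proof.
move=> By; case: (lerP 0 k) => hk; last by right.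
left; have := pspan_comb (pspan1 By) (pspan1 By) hk (lexx 0).
by rewrite scale0r addr0.
Qed.

Lemma fund_pos Y al be y : fundamental Y al be -> Y y -> y <> 0 -> y <> al -> y <> be ->
  exists x z : R, 0 < x /\ 0 < z /\ y = x *: al + z *: be.
Proof.
move=> hF Yy hy0 hya hyb; have [Yal [Ybe [hsub [h1 h2]]]] := hF.
have [x [z [hx [hz ey]]]] := hsub y Yy.
exists x, z; split; last split=> //.
- rewrite lt0r hx andbT; apply/negP => /eqP x0; apply: h2.
  have zn : z != 0 by apply/negP => /eqP z0; apply: hy0; rewrite ey x0 z0 !scale0r addr0.
  have Ebe : be = z^-1 *: y by rewrite ey x0 scale0r add0r scalerA mulVf // scale1r.
  have Sy : Defs.setD1P Y be y by split.
  case: (pspan_scale1 (z^-1) Sy) => [|hlt]; first by rewrite -Ebe.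
  by move: hlt; rewrite ltNge invr_ge0 hz.
- rewrite lt0r hz andbT; apply/negP => /eqP z0; apply: h1.
  have xn : x != 0 by apply/negP => /eqP x0; apply: hy0; rewrite ey x0 z0 !scale0r addr0.
  have Eal : al = x^-1 *: y by rewrite ey z0 scale0r addr0 scalerA mulVf // scale1r.
  have Sy : Defs.setD1P Y al y by split.
  case: (pspan_scale1 (x^-1) Sy) => [|hlt]; first by rewrite -Eal.
  by move: hlt; rewrite ltNge invr_ge0 hx.
Qed.

Lemma twoD_core al be a b g (a1 a2 b1 b2 p q : R) :
  0 <= a1 -> 0 <= a2 -> 0 <= b1 -> 0 <= b2 -> 0 <= p -> 0 <= q ->
  a = a1 *: al + a2 *: be -> b = b1 *: al + b2 *: be -> g = p *: a + q *: b ->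
  a2 * b1 <= a1 * b2 -> b <> 0 -> g <> 0 ->
  pspan2 al b g /\ pspan2 al g a.
Proof.
move=> ha1 ha2 hb1 hb2 hp hq ea eb eg hdet hb0 hg0.
split.
- case: (ltrP 0 b2) => hb2'.
  + exists (p * a1 - p * a2 * b1 / b2), (p * a2 / b2 + q).
    split.
      have -> : p * a1 - p * a2 * b1 / b2 = p * (a1 * b2 - a2 * b1) / b2.
        by field; rewrite gt_eqF.
      by apply: divr_ge0; [apply: mulr_ge0 => //; rewrite subr_ge0|apply: ltW].
    split; first by apply: addr_ge0 => //; apply: divr_ge0 => //; apply: mulr_ge0.
    rewrite eg ea eb lcE lcE2; apply: lc_eq; field; by rewrite gt_eqF.
  + have b20 : b2 = 0 by apply/eqP; rewrite eq_le hb2'.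
    have b1n : b1 != 0.
      by apply/negP => /eqP b10; apply: hb0; rewrite eb b10 b20 !scale0r addr0.
    have a20 : a2 = 0.
      apply/eqP; move: hdet; rewrite b20 mulr0 => hdet.
      have : a2 * b1 == 0 by rewrite eq_le hdet mulr_ge0.
      by rewrite mulf_eq0 (negbTE b1n) orbF.
    exists (p * a1), q; split; first exact: mulr_ge0. split=> //.
    by rewrite eg ea a20 scale0r addr0 scalerA.
- set g1 := p * a1 + q * b1; set g2 := p * a2 + q * b2.
  have eg' : g = g1 *: al + g2 *: be by rewrite eg ea eb lcE.
  case: (ltrP 0 g2) => hg2.
  + exists (a1 - a2 * g1 / g2), (a2 / g2).
    split.
      have -> : a1 - a2 * g1 / g2 = q * (a1 * b2 - a2 * b1) / g2.
        by rewrite /g1 /g2; field; rewrite gt_eqF.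
      by apply: divr_ge0; [apply: mulr_ge0 => //; rewrite subr_ge0|apply: ltW].
    split; first by apply: divr_ge0 => //; apply: ltW.
    rewrite eg' ea lcE2; apply: lc_eq; rewrite /g1 /g2; field; by rewrite gt_eqF.
  + have g20 : g2 = 0 by apply/eqP; rewrite eq_le hg2 addr_ge0 // mulr_ge0.
    have pa20 : p * a2 = 0.
      apply/eqP; rewrite eq_le mulr_ge0 // andbT -g20 /g2 lerDl mulr_ge0 //.
    have qb20 : q * b2 = 0 by move: g20; rewrite /g2 pa20 add0r.
    case: (boolP (a2 == 0)) => [/eqP a20|a2n].
      exists a1, 0; split=> //; split=> //.
      by rewrite ea a20 !scale0r !addr0.
    exfalso; move/eqP: pa20; rewrite mulf_eq0 (negbTE a2n) orbF => /eqP p0.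
    have qn : q != 0.
      by apply/negP => /eqP q0; apply: hg0; rewrite eg p0 q0 !scale0r addr0.
    move/eqP: qb20; rewrite mulf_eq0 (negbTE qn) /= => /eqP b20.
    have : a2 * b1 == 0 by rewrite eq_le mulr_ge0 // andbT; move: hdet; rewrite b20 mulr0.
    rewrite mulf_eq0 (negbTE a2n) /= => /eqP b10.
    by apply: hb0; rewrite eb b10 b20 !scale0r addr0.
Qed.

Lemma twoD al be a b g : pspan2 al be a -> pspan2 al be b -> pspan2 a b g ->
  b <> 0 -> g <> 0 ->
  (pspan2 al b g /\ pspan2 al g a) \/ (pspan2 be b g /\ pspan2 be g a).
Proof.
move=> [a1 [a2 [ha1 [ha2 ea]]]] [b1 [b2 [hb1 [hb2 eb]]]] [p [q [hp [hq eg]]]] hb0 hg0.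
case: (lerP (a2 * b1) (a1 * b2)) => hdet.
  by left; apply: (twoD_core ha1 ha2 hb1 hb2 hp hq ea eb eg hdet).
right; apply: (twoD_core ha2 ha1 hb2 hb1 hp hq _ _ eg) => //.
- by rewrite ea addrC.
- by rewrite eb addrC.
- exact: ltW.
Qed.

End Geo.
Section Geo2.
Variables (R : realType) (n : nat).
Local Notation V := 'rV[R]_n.
Implicit Types (a b g u v w al be : V) (B X Y : V -> Prop).

Lemma dim_le1 Y be a0 b0 : (forall y, Y y -> y \in <[be]>%VS) -> Y a0 -> Y b0 ->
  \dim (lspan2 a0 b0) <> 2%N.
Proof.
move=> hY ha hb.
have S : (lspan2 a0 b0 <= <[be]>)%VS by rewrite subv_add -!memvE !hY.
have := dimvS S; rewrite dim_vline => h E; rewrite E in h.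
by move: h; case: (be != 0).
Qed.

Lemma pointed X Y al be (c1 c2 : R) : lin2_subset X Y -> fundamental Y al be ->
  0 <= c1 -> 0 <= c2 -> c1 *: al + c2 *: be = 0 -> c1 = 0 /\ c2 = 0.
Proof.
move=> [a0 [b0 [Ya [Yb [hd _]]]]] hF hc1 hc2 hrel.
have [nal nbe] := fund_nz hF.
have [_ [_ [hsub _]]] := hF.
have c10 : c1 = 0.
  case: (eqVneq c1 0) => // c1n; exfalso.
  have eal : al = (- (c2 / c1)) *: be.
    apply: (@scalerI _ _ c1 c1n); rewrite scalerA mulrN mulrCA mulfV // mulr1.
    by apply/eqP; rewrite -subr_eq0 scaleNr opprK hrel.
  apply: (dim_le1 _ Ya Yb hd) => y Yy.
  have [x [z [_ [_ ->]]]] := hsub y Yy.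
  by rewrite eal scalerA -scalerDl; apply/vlineP; eexists.
split=> //; case: (eqVneq c2 0) => // c2n; exfalso; apply: nbe.
apply: (@scalerI _ _ c2 c2n); rewrite scaler0 -hrel c10 scale0r add0r //.
Qed.

Lemma lc3 (p q : V) (s t c x1 y1 : R) :
  s *: p + t *: q + c *: (x1 *: p + y1 *: q) = (s + c * x1) *: p + (t + c * y1) *: q.
Proof.
rewrite scalerDr !scalerA !scalerDl.
by rewrite -!addrA; congr (_ + _); rewrite addrCA.
Qed.

Lemma piv3 (p q w x : V) (l1 l2 l3 s t c : R) :
  0 <= s -> 0 <= t -> 0 <= c ->
  0 < l3 -> (0 < l1 -> c * l1 <= s * l3) -> (0 < l2 -> c * l2 <= t * l3) ->
  l1 *: p + l2 *: q + l3 *: w = 0 -> x = s *: p + t *: q + c *: w -> pspan2 p q x.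
Proof.
move=> hs ht hc h3 h1 h2 hrel ->.
have l3n : l3 != 0 by rewrite gt_eqF.
have ew : w = (- (l1 / l3)) *: p + (- (l2 / l3)) *: q.
  apply: (@scalerI _ _ l3 l3n); rewrite scalerDr !scalerA !mulrN ![l3 * (_ / _)]mulrC.
  rewrite -!mulrA !mulVf // !mulr1 !scaleNr; apply/eqP.
  by rewrite -subr_eq0 opprD !opprK -hrel addrC.
rewrite ew lc3; apply: pspan2_lin.
- case: (lerP l1 0) => hl1.
    rewrite mulrN subr_ge0; apply: (le_trans _ hs).
    by rewrite mulr_ge0_le0 // ler_pdivrMr // mul0r.
  rewrite mulrN subr_ge0 mulrA ler_pdivrMr //; exact: h1.
- case: (lerP l2 0) => hl2.
    rewrite mulrN subr_ge0; apply: (le_trans _ ht).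
    by rewrite mulr_ge0_le0 // ler_pdivrMr // mul0r.
  rewrite mulrN subr_ge0 mulrA ler_pdivrMr //; exact: h2.
Qed.

End Geo2.
Section Car.
Variables (R : realType) (n : nat).
Local Notation V := 'rV[R]_n.
Implicit Types (a b g u v w al be : V) (B X Y : V -> Prop).

Lemma minratio (l1 l2 l3 s t c : R) : 0 <= s -> 0 <= t -> 0 <= c ->
  (0 < l1 \/ 0 < l2 \/ 0 < l3) ->
  (0 < l3 /\ (0 < l1 -> c * l1 <= s * l3) /\ (0 < l2 -> c * l2 <= t * l3)) \/
  (0 < l1 /\ (0 < l2 -> s * l2 <= t * l1) /\ (0 < l3 -> s * l3 <= c * l1)) \/
  (0 < l2 /\ (0 < l1 -> t * l1 <= s * l2) /\ (0 < l3 -> t * l3 <= c * l2)).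
Proof.
move=> hs ht hc hpos.
case: (lerP l1 0) => h1; case: (lerP l2 0) => h2; case: (lerP l3 0) => h3.
- by exfalso; lra.
- left; split=> //; split=> hh; lra.
- right; right; split=> //; split=> hh; lra.
- case: (lerP (c * l2) (t * l3)) => r23.
    by left; split=> //; split=> hh //; lra.
  by right; right; split=> //; split=> hh //; lra.
- right; left; split=> //; split=> hh; lra.
- case: (lerP (c * l1) (s * l3)) => r13.
    by left; split=> //; split=> hh //; lra.
  by right; left; split=> //; split=> hh //; lra.
- case: (lerP (t * l1) (s * l2)) => r12.
    by right; right; split=> //; split=> hh //; lra.
  by right; left; split=> //; split=> hh //; lra.
- case: (lerP (c * l1) (s * l3)) => r13; case: (lerP (c * l2) (t * l3)) => r23.
  + by left; split=> //; split=> hh //.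
  + right; right; split=> //; split=> hh //; last lra.
    nra.
  + right; left; split=> //; split=> hh //; last lra.
    nra.
  + case: (lerP (t * l1) (s * l2)) => r12.
      right; right; split=> //; split=> hh //; lra.
    right; left; split=> //; split=> hh //; lra.
Qed.

Lemma car3_rel (p q w x : V) (l1 l2 l3 s t c : R) :
  0 <= s -> 0 <= t -> 0 <= c -> (0 < l1 \/ 0 < l2 \/ 0 < l3) ->
  l1 *: p + l2 *: q + l3 *: w = 0 -> x = s *: p + t *: q + c *: w ->
  pspan2 p q x \/ pspan2 p w x \/ pspan2 q w x.
Proof.
move=> hs ht hc hpos hrel hx.
have H := minratio hs ht hc hpos.
destruct H as [[hA [hB hC]]|[[hA [hB hC]]|[hA [hB hC]]]].
- by left; apply: (piv3 hs ht hc hA hB hC hrel hx).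
- right; right.
  have hrel' : l2 *: q + l3 *: w + l1 *: p = 0 by rewrite -hrel [LHS]addrC addrA.
  have hx' : x = t *: q + c *: w + s *: p by rewrite hx [RHS]addrC addrA.
  exact: (piv3 ht hc hs hA hB hC hrel' hx').
- right; left.
  have hrel' : l1 *: p + l3 *: w + l2 *: q = 0 by rewrite -hrel -!addrA [l3 *: _ + _]addrC.
  have hx' : x = s *: p + c *: w + t *: q by rewrite hx -!addrA [c *: _ + _]addrC.
  exact: (piv3 hs hc ht hA hB hC hrel' hx').
Qed.

Lemma lcE3 (a0 b0 : V) (k1 k2 k3 x1 y1 x2 y2 x3 y3 : R) :
  k1 *: (x1 *: a0 + y1 *: b0) + k2 *: (x2 *: a0 + y2 *: b0) + k3 *: (x3 *: a0 + y3 *: b0) =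
  (k1 * x1 + k2 * x2 + k3 * x3) *: a0 + (k1 * y1 + k2 * y2 + k3 * y3) *: b0.
Proof. by rewrite lcE -[X in X + _](scale1r) lcE !mul1r. Qed.

Lemma car3 (a0 b0 p q w x : V) (s t c : R) :
  p \in lspan2 a0 b0 -> q \in lspan2 a0 b0 -> w \in lspan2 a0 b0 ->
  0 <= s -> 0 <= t -> 0 <= c -> x = s *: p + t *: q + c *: w ->
  pspan2 p q x \/ pspan2 p w x \/ pspan2 q w x.
Proof.
move=> /lspan2_coords [p1 [p2 ep]] /lspan2_coords [q1 [q2 eq]]
       /lspan2_coords [w1 [w2 ew]] hs ht hc hx.
set l1 := q1 * w2 - q2 * w1; set l2 := w1 * p2 - w2 * p1; set l3 := p1 * q2 - p2 * q1.
have hrel : l1 *: p + l2 *: q + l3 *: w = 0.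
  rewrite ep eq ew lcE3.
  have -> : l1 * p1 + l2 * q1 + l3 * w1 = 0 by rewrite /l1 /l2 /l3; ring.
  have -> : l1 * p2 + l2 * q2 + l3 * w2 = 0 by rewrite /l1 /l2 /l3; ring.
  by rewrite !scale0r addr0.
have hrelN : (- l1) *: p + (- l2) *: q + (- l3) *: w = 0.
  by rewrite !scaleNr -!opprD hrel oppr0.
case: (boolP ((0 < l1) || (0 < l2) || (0 < l3))) => [hp|hnp].
  apply: (car3_rel hs ht hc _ hrel hx).
  by case/orP: hp => [/orP[]|]; auto.
case: (boolP ((l1 < 0) || (l2 < 0) || (l3 < 0))) => [hn|hnn].
  apply: (car3_rel hs ht hc _ hrelN hx).
  by case/orP: hn => [/orP[]|]; rewrite !oppr_gt0; auto.
have l10 : l1 = 0 by move: hnp hnn; rewrite !negb_or -!leNgt => /andP[/andP[a _] _] /andP[/andP[b _] _]; lra.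
have l20 : l2 = 0 by move: hnp hnn; rewrite !negb_or -!leNgt => /andP[/andP[_ a] _] /andP[/andP[_ b] _]; lra.
have l30 : l3 = 0 by move: hnp hnn; rewrite !negb_or -!leNgt => /andP[_ a] /andP[_ b]; lra.
case: (boolP ((p1 == 0) && (p2 == 0))) => [/andP[/eqP p10 /eqP p20]|pn].
  right; right; exists t, c; split=> //; split=> //.
  by rewrite hx ep p10 p20 !scale0r addr0 !scaler0 add0r.
set N := p1 * p1 + p2 * p2.
have Npos : 0 < N.
  have s1 : 0 <= p1 * p1 by rewrite -expr2 sqr_ge0.
  have s2 : 0 <= p2 * p2 by rewrite -expr2 sqr_ge0.
  rewrite /N; move: pn; rewrite negb_and => /orP[h|h].
    have : 0 < p1 * p1 by rewrite lt0r mulf_neq0 //= s1.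
    lra.
  have : 0 < p2 * p2 by rewrite lt0r mulf_neq0 //= s2.
  lra.
set mu := (q1 * p1 + q2 * p2) / N; set nu := (w1 * p1 + w2 * p2) / N.
have Nn : N != 0 by rewrite gt_eqF.
have eqm : q = mu *: p.
  rewrite eq ep scalerDr !scalerA; apply: lc_eq; rewrite /mu mulrAC.
    have : (q1 * p1 + q2 * p2) * p1 = q1 * N.
      apply/eqP; rewrite -subr_eq0; apply/eqP; transitivity (p2 * l3).
        by rewrite /l3 /N; ring.
      by rewrite l30 mulr0.
    by move=> ->; rewrite mulfK.
  have : (q1 * p1 + q2 * p2) * p2 = q2 * N.
      apply/eqP; rewrite -subr_eq0; apply/eqP; transitivity ((- p1) * l3).
        by rewrite /l3 /N; ring.
      by rewrite l30 mulr0.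
    by move=> ->; rewrite mulfK.
have ewm : w = nu *: p.
  rewrite ew ep scalerDr !scalerA; apply: lc_eq; rewrite /nu mulrAC.
    have : (w1 * p1 + w2 * p2) * p1 = w1 * N.
      apply/eqP; rewrite -subr_eq0; apply/eqP; transitivity ((- p2) * l2).
        by rewrite /l2 /N; ring.
      by rewrite l20 mulr0.
    by move=> ->; rewrite mulfK.
  have : (w1 * p1 + w2 * p2) * p2 = w2 * N.
      apply/eqP; rewrite -subr_eq0; apply/eqP; transitivity (p1 * l2).
        by rewrite /l2 /N; ring.
      by rewrite l20 mulr0.
    by move=> ->; rewrite mulfK.
set k := s + t * mu + c * nu.
have exk : x = k *: p by rewrite hx eqm ewm !scalerA -!scalerDl.
case: (lerP 0 k) => hk.
  by left; rewrite exk; apply: pspan2_l.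
case: (ltrP mu 0) => hmu.
  left; exists 0, (k / mu); split=> //; split; first by rewrite ltW // ltr_ndivlMr // mul0r.
  by rewrite scale0r add0r eqm scalerA mulfVK ?exk // ltr0_neq0.
case: (ltrP nu 0) => hnu.
  right; left; exists 0, (k / nu); split=> //; split; first by rewrite ltW // ltr_ndivlMr // mul0r.
  by rewrite scale0r add0r ewm scalerA mulfVK ?exk // ltr0_neq0.
exfalso; move: hk; rewrite /k; nra.
Qed.

Lemma carath (a0 b0 : V) S v : (forall w, S w -> w \in lspan2 a0 b0) -> pspan S v ->
  v = 0 \/ exists p q, S p /\ S q /\ pspan2 p q v.
Proof.
move=> hS [k [wf [cf [hw [hc ->]]]]].
elim: k wf cf hw hc => [|k IH] wf cf hw hc; first by left; rewrite big_ord0.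
rewrite big_ord_recr /=.
have := IH (fun i => wf (widen_ord (leqnSn k) i)) (fun i => cf (widen_ord (leqnSn k) i))
  (fun i => hw _) (fun i => hc _).
case=> [->|[p [q [Sp [Sq [s [t [hs [ht ev]]]]]]]]].
  right; exists (wf ord_max), (wf ord_max); split=> //; split=> //.
  by rewrite add0r; apply: pspan2_l.
right; rewrite ev.
case: (car3 (hS _ Sp) (hS _ Sq) (hS _ (hw ord_max)) hs ht (hc ord_max) (erefl _)).
  by move=> h; exists p, q.
case=> h; first by exists p, (wf ord_max).
by exists q, (wf ord_max).
Qed.

Lemma rank2_main X Xm U (a0 b0 : V) : (forall v, X v -> v \in lspan2 a0 b0) ->
  (forall v, Xm v -> X v) -> closed_in Xm U ->
  forall v, closure_in X U v -> Xm v -> U v.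
Proof.
move=> hX hXm [hUs hUc] v hcl hv.
case: (classic (exists u0, U u0)) => [[u0 Uu0]|hne]; last first.
  exfalso; apply: (hcl (fun _ => False)) => //.
  split=> //. by move=> u Uu; apply: hne; exists u.
have [Xv pv] : X v /\ pspan U v.
  apply: (hcl (fun v => X v /\ pspan U v)).
    split; first by move=> w [].
    move=> a b g [_ pa] [_ pb] Xg [c [d [hc [hd eg]]]]; split=> //.
    by rewrite eg; exact: pspan_comb.
  by move=> u Uu; split; [apply/hXm/hUs | apply: pspan1].
have hS : forall w, U w -> w \in lspan2 a0 b0 by move=> w Uw; apply/hX/hXm/hUs.
case: (carath hS pv) => [v0|[p [q [Up [Uq hpq]]]]].
  by rewrite v0; apply: (hUc u0 u0) => //; [rewrite -v0 | apply: pspan2_0].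
exact: (hUc p q).
Qed.

End Car.
Section RealAux.
Variable R : realType.
Lemma sign_pos (x y A B : R) : 0 < x -> 0 < y -> x * A + y * B = 0 -> (A != 0) || (B != 0) ->
  0 < A \/ 0 < B.
Proof.
move=> hx hy hs hn.
case: (ltrP 0 A) => hA; first by left.
case: (ltrP 0 B) => hB; first by right.
exfalso.
have hA' : x * A <= 0 by rewrite pmulr_rle0.
have hB' : y * B <= 0 by rewrite pmulr_rle0.
have e1 : x * A = 0 by lra.
have e2 : y * B = 0 by lra.
move: e1 e2 hn => /eqP; rewrite mulf_eq0 gt_eqF //= => /eqP ->.
by move/eqP; rewrite mulf_eq0 gt_eqF //= => /eqP ->; rewrite eqxx.
Qed.

Lemma real1 (a' b' x y hr ho tr to hp tp : R) : 0 < a' -> 0 < b' -> 0 <= x -> 0 <= y ->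
  hr < 0 -> 0 = a' * hr + b' * ho -> 1 = a' * tr + b' * to ->
  hp = x * hr + y * ho -> tp = x * tr + y * to -> 0 < hp -> 0 < tr * hp - tp * hr.
Proof.
move=> ha hb hx hy hr0 e1 e2 ep et hp0.
have ho0 : 0 < ho.
  have h1 : a' * hr < 0 by rewrite pmulr_rlt0.
  have : 0 < b' * ho by lra.
  by rewrite pmulr_rgt0.
have hy0 : 0 < y.
  have : x * hr <= 0 by rewrite mulr_ge0_le0 // ltW.
  move=> h; have : 0 < y * ho by lra.
  by rewrite pmulr_lgt0.
have hD : a' * (tr * ho - to * hr) = ho.
  have -> : a' * (tr * ho - to * hr) = ho * (a' * tr + b' * to) + to * (- (a' * hr) - b' * ho).
    by ring.
  have z : - (a' * hr) - b' * ho = 0 by rewrite -opprD -e1 oppr0.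
  by rewrite z mulr0 addr0 -e2 mulr1.
have D0 : 0 < tr * ho - to * hr.
  by rewrite -(pmulr_rgt0 _ ha) hD.
have -> : tr * hp - tp * hr = y * (tr * ho - to * hr) by rewrite ep et; ring.
exact: mulr_gt0.
Qed.

Lemma real2 (tp hp tr hr : R) : 0 < hp -> hr < 0 -> tp / hp <= tr / hr -> tr * hp - tp * hr <= 0.
Proof.
move=> hp0 hr0 h.
have hrn : hr != 0 by rewrite ltr0_neq0.
have hpn : hp != 0 by rewrite gt_eqF.
set Q := tr / hr in h.
have eQ : Q * hr = tr by rewrite /Q mulfVK.
have h' : tp <= Q * hp by rewrite -ler_pdivrMr.
rewrite -eQ; nra.
Qed.

Lemma exists_min (s : seq nat) (f : nat -> R) : s != [::] ->
  exists2 j, j \in s & forall j', j' \in s -> f j <= f j'.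
Proof.
elim: s => [//|a s IH] _.
case: (eqVneq s [::]) => [->|sn].
  exists a; first by rewrite mem_seq1.
  by move=> j'; rewrite mem_seq1 => /eqP ->.
have [j js hj] := IH sn.
case: (lerP (f a) (f j)) => ha.
  exists a; first by rewrite mem_head.
  move=> j'; rewrite in_cons => /orP[/eqP ->//|/hj]; exact: le_trans.
exists j; first by rewrite in_cons js orbT.
move=> j'; rewrite in_cons => /orP[/eqP ->|/hj //]; exact: ltW.
Qed.
End RealAux.
Section Main.
Variables (R : realType) (n : nat) (gamma : nat -> 'rV[R]_n) (len : option nat).
Hypothesis gamma_inj : forall i j, valid len i -> valid len j -> gamma i = gamma j -> i = j.
Hypothesis has_fund : forall Y, lin2_subset (Xset gamma len) Y -> exists a b, fundamental Y a b.
Hypothesis suit : suitable gamma len.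
Local Notation V := 'rV[R]_n.
Local Notation X := (Xset gamma len).
Local Notation Xs := (Xseg gamma len).
Implicit Types (a b g u v w al be : V) (B Y W : V -> Prop).

Lemma Xs_X i v : Xs i v -> X v.
Proof. by case=> j [hv [_ ->]]; exists j. Qed.

Lemma Xs_mono i j v : (i <= j)%N -> Xs i v -> Xs j v.
Proof. by move=> hij [k [hv [hk ->]]]; exists k; split=> //; split=> //; apply: leq_trans hij. Qed.

Lemma Xs_gamma i j : valid len j -> Xs i (gamma j) -> (j < i)%N.
Proof. by move=> vj [k [vk [hk /(gamma_inj vj vk) ->]]]. Qed.

Lemma Xs_S k v : Xs k.+1 v <-> Xs k v \/ (valid len k /\ v = gamma k).
Proof.
split.
  case=> j [vj [hj ->]]; rewrite ltnS leq_eqVlt in hj; case/orP: hj => [/eqP ejk|hj].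
    by right; rewrite -ejk.
  by left; exists j; split=> //; split.
case=> [[j [vj [hj ->]]]|[vk ->]]; first by exists j; split=> //; split=> //; apply: ltnW.
by exists k.
Qed.

Lemma X_gamma j : valid len j -> X (gamma j).
Proof. by move=> vj; exists j. Qed.

Lemma closed_ext Y Y' B B' : (forall v, Y v <-> Y' v) -> (forall v, B v <-> B' v) ->
  closed_in Y B -> closed_in Y' B'.
Proof.
move=> hY hB [hs hc]; split; first by move=> v /hB /hs /hY.
by move=> a b g /hB Ba /hB Bb /hY Yg hp; apply/hB; apply: (hc a b).
Qed.

Lemma biclosed_ext Y Y' B B' : (forall v, Y v <-> Y' v) -> (forall v, B v <-> B' v) ->
  biclosed_in Y B -> biclosed_in Y' B'.
Proof.
move=> hY hB [h1 [h2 h3]]; split; first exact: (closed_ext hY hB).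
split; first by move=> v /hB /h2 /hY.
apply: (closed_ext hY _ h3) => v; rewrite /Defs.setDP; split.
  by case=> /hY ? nB; split=> // /hB.
by case=> /hY ? nB; split=> // /hB.
Qed.

Lemma biclosed_compl Y W : biclosed_in Y W -> biclosed_in Y (Defs.setDP Y W).
Proof.
move=> [h1 [h2 h3]]; split=> //; split; first by move=> v [].
apply: (closed_ext (fun v => iff_refl _) _ h1) => v; split.
  by move=> Wv; split; [apply: h2 | case=> _ []].
by case=> Yv h; apply: NNPP => nW; apply: h.
Qed.

Lemma CC i W a b c d y : biclosed_in (Xs i) W -> W a -> W b -> Xs i c -> ~ W c ->
  Xs i d -> ~ W d -> X y -> y <> 0 -> pspan2 a b y -> pspan2 c d y -> False.
Proof.
move=> hW Wa Wb Xc Wc Xd Wd Xy y0 hab hcd.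
have [[hWs hWc] [_ hCc]] := hW.
have [F [hfull [Fa [Fb [Fc hcl]]]]] := suit.2 i a b c (hWs _ Wa) (hWs _ Wb) Xc.
have [hFX hF] := hfull.
have Fy : F y by case: ((hF a b Fa Fb y).2 (conj Xy (pspan2_lspan2 hab))).
pose Yf := fun v => F v /\ Xs i v.
pose Bf := fun v => W v /\ F v.
have hB : biclosed_in Yf Bf.
  split.
    split; first by move=> v [Wv Fv]; split=> //; apply: hWs.
    move=> a' b' g [Wa' Fa'] [Wb' Fb'] [Fg Xg] hp; split=> //.
    exact: (hWc a' b').
  split; first by move=> v [Wv Fv]; split=> //; apply: hWs.
  split; first by move=> v [].
  move=> a' b' g [[Fa' Xa'] nBa'] [[Fb' Xb'] nBb'] [Fg Xg] hp; split; first by [].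
  case=> Wg _.
  have nWa' : ~ W a' by move=> h; apply: nBa'.
  have nWb' : ~ W b' by move=> h; apply: nBb'.
  by have [_ ] := hCc.2 a' b' g (conj Xa' nWa') (conj Xb' nWb') Xg hp.
apply: y0; apply: (hcl Bf hB).
  by apply: (pspan_of2 (B := Bf) (a := a) (b := b)).
have [r [s [hr [hs ey]]]] := hcd.
case: (eqVneq s 0) => [s0|sn].
  apply: (pspan_of2 (a := c) (b := c)).
    - by split; [split | case].
    - by split; [split | case].
  by exists r, 0; split=> //; split=> //; rewrite scale0r addr0 ey s0 scale0r addr0.
have Fd : F d.
  have hd : d \in lspan2 y c by apply: (lspan2_swap sn); rewrite ey.
  by case: ((hF y c Fy Fc d).2 (conj (Xs_X Xd) hd)).
apply: (pspan_of2 (a := c) (b := d)).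
- by split; [split | case].
- by split; [split | case].
by exists r, s.
Qed.

Lemma in_lspan2_l a b : a \in lspan2 a b.
Proof. by have := lin_lspan2 a b 1 0; rewrite scale1r scale0r addr0. Qed.

Lemma in_lspan2_r a b : b \in lspan2 a b.
Proof. by have := lin_lspan2 a b 0 1; rewrite scale1r scale0r add0r. Qed.

Definition Pl a b := fun v => X v /\ v \in lspan2 a b.

Lemma Pl_lin2 a b : X a -> X b -> \dim (lspan2 a b) = 2%N -> lin2_subset X (Pl a b).
Proof.
move=> Xa Xb hd; exists a, b; split; first by split=> //; apply: in_lspan2_l.
split; first by split=> //; apply: in_lspan2_r.
by split.
Qed.

Lemma X_idx v : X v -> exists j, valid len j /\ v = gamma j.
Proof. by case=> j [vj ->]; exists j. Qed.

Lemma fund_before_zero z Y al be : valid len z -> gamma z = 0 ->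
  lin2_subset X Y -> fundamental Y al be -> Xs z al /\ Xs z be.
Proof.
move=> vz gz hY hF.
have [nal nbe] := fund_nz hF.
have [Yal [Ybe _]] := hF.
have [a0 [b0 [_ [_ [_ hYc]]]]] := hY.
have [i [vi ei]] : exists i, valid len i /\ al = gamma i by apply: X_idx; case: (hYc al).1.
have [j [vj ej]] : exists j, valid len j /\ be = gamma j by apply: X_idx; case: (hYc be).1.
have Y0 : Y (gamma z) by apply/hYc; rewrite gz; split; [rewrite -gz; exact: X_gamma | exact: mem0v].
have := suit.1 Y hY i j z vi vj vz; rewrite -ei -ej => h.
have n1 : gamma z <> al by rewrite gz => e; apply: nal; rewrite -e.
have n2 : gamma z <> be by rewrite gz => e; apply: nbe; rewrite -e.
have [hi hj] := h hF Y0 n1 n2.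
by split; [exists i | exists j]; split=> //; split.
Qed.

Lemma fund_below k Y al be w : lin2_subset X Y -> fundamental Y al be ->
  Y w -> Xs k w -> w <> al -> w <> be -> Xs k al /\ Xs k be.
Proof.
move=> hY hF Yw Xw nwa nwb.
have [Yal [Ybe _]] := hF.
have [a0 [b0 [_ [_ [_ hYc]]]]] := hY.
have [i [vi ei]] : exists i, valid len i /\ al = gamma i by apply: X_idx; case: (hYc al).1.
have [j [vj ej]] : exists j, valid len j /\ be = gamma j by apply: X_idx; case: (hYc be).1.
have [kw [vkw ew]] : exists kw, valid len kw /\ w = gamma kw by apply: X_idx; apply: Xs_X Xw.
have lt : (kw < k)%N by apply: Xs_gamma vkw _; rewrite -ew.
have h1 := suit.1 Y hY i j kw vi vj vkw.
rewrite -ei -ej -ew in h1.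
have [hi hj] := h1 hF Yw nwa nwb.
split; [exists i | exists j]; split=> //; split=> //; exact: ltn_trans lt.
Qed.

Lemma fund_in_Xs k Y al be y1 y2 : lin2_subset X Y -> fundamental Y al be ->
  Y y1 -> Y y2 -> y1 <> y2 -> Xs k y1 -> Xs k y2 -> Xs k al /\ Xs k be.
Proof.
move=> hY hF Y1 Y2 n12 X1 X2.
case: (classic (y1 = al)) => e1a.
  case: (classic (y2 = be)) => e2b; first by rewrite -e1a -e2b.
  case: (classic (y2 = al)) => e2a; first by exfalso; apply: n12; rewrite e1a e2a.
  exact: (fund_below hY hF Y2 X2).
case: (classic (y1 = be)) => e1b; last exact: (fund_below hY hF Y1 X1).
case: (classic (y2 = al)) => e2a; first by rewrite -e1b -e2a.
case: (classic (y2 = be)) => e2b; first by exfalso; apply: n12; rewrite e1b e2b.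
exact: (fund_below hY hF Y2 X2).
Qed.

Lemma Xs_new k : valid len k -> ~ Xs k (gamma k).
Proof. by move=> vk /(Xs_gamma vk); rewrite ltnn. Qed.

Lemma SW k W u g : (forall v, Xs k v -> v <> 0) -> biclosed_in (Xs k) W -> valid len k ->
  W u -> Xs k g -> ~ W g -> pspan2 (gamma k) u g ->
  exists c1 c2, Xs k c1 /\ ~ W c1 /\ Xs k c2 /\ ~ W c2 /\ pspan2 c1 c2 (gamma k).
Proof.
move=> nz hW vk Wu Xg nWg [c [d [hc [hd eg]]]].
have [[hWs hWc] _] := hW.
have Xu := hWs u Wu.
have u0 := nz u Xu; have g0 := nz g Xg.
case: (eqVneq c 0) => [c0|cn].
  exfalso; apply: nWg; apply: (hWc u u g Wu Wu Xg).
  by rewrite eg c0 scale0r add0r; apply: pspan2_l.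
case: (eqVneq d 0) => [d0|dn].
  exists g, g; split=> //; split=> //; split=> //; split=> //.
  have -> : gamma k = c^-1 *: g by rewrite eg d0 scale0r addr0 scalerA mulVf // scale1r.
  by apply: pspan2_l; rewrite invr_ge0.
have cpos : 0 < c by rewrite lt0r cn hc.
have dpos : 0 < d by rewrite lt0r dn hd.
case: (eqVneq (\dim (lspan2 (gamma k) u)) 2%N) => [hd2|hd2].
  have hY := Pl_lin2 (X_gamma vk) (Xs_X Xu) hd2.
  have [al [be hF]] := has_fund hY.
  have ug : u <> g by move=> e; apply: nWg; rewrite -e.
  have Yu : Pl (gamma k) u u by split; [exact: Xs_X Xu | exact: in_lspan2_r].
  have Yg : Pl (gamma k) u g by split; [exact: Xs_X Xg | rewrite eg; exact: lin_lspan2].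
  have Yk : Pl (gamma k) u (gamma k) by split; [exact: X_gamma | exact: in_lspan2_l].
  have [Xal Xbe] := fund_in_Xs hY hF Yu Yg ug Xu Xg.
  have [_ [_ [hsub _]]] := hF.
  have gk0 : pspan2 (gamma k) u g by exists c, d.
  case: (twoD (hsub _ Yk) (hsub _ Yu) gk0 u0 g0) => [[h1 h2]|[h1 h2]].
    case: (classic (W al)) => Wal; first by exfalso; apply: nWg; apply: (hWc al u g).
    by exists al, g.
  case: (classic (W be)) => Wbe; first by exfalso; apply: nWg; apply: (hWc be u g).
  by exists be, g.
have un : u != 0 by apply/eqP.
have hdn : \dim (lspan2 (gamma k) u) <> 2%N by move/eqP; rewrite (negbTE hd2).
have [l el] := dep_of_dim un hdn.
set K := c * l + d.
have egK : g = K *: u by rewrite eg el scalerA -scalerDl.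
case: (lerP 0 K) => hK.
  by exfalso; apply: nWg; apply: (hWc u u g Wu Wu Xg); rewrite egK; apply: pspan2_l.
have lneg : l < 0.
  rewrite ltNge; apply/negP => hl.
  have : 0 <= c * l by apply: mulr_ge0 => //; apply: ltW.
  by rewrite /K in hK; lra.
have Kn : K != 0 by rewrite ltr0_neq0.
exists g, g; split=> //; split=> //; split=> //; split=> //.
have -> : gamma k = (l / K) *: g by rewrite egK scalerA mulfVK.
apply: pspan2_l; apply: mulr_le0; [exact: ltW | rewrite invr_le0; exact: ltW].
Qed.

Lemma pspan2_back a g : pspan2 a a g -> g <> 0 -> pspan2 g g a.
Proof.
move=> [c [d [hc [hd eg]]]] g0.
have eg' : g = (c + d) *: a by rewrite eg scalerDl.
have cd : c + d != 0.
  by apply/eqP => e; apply: g0; rewrite eg' e scale0r.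
have -> : a = (c + d)^-1 *: g by rewrite eg' scalerA mulVf // scale1r.
by apply: pspan2_l; rewrite invr_ge0 addr_ge0.
Qed.

Definition NewW W k := fun v => W v \/
  (valid len k /\ (exists a b, W a /\ W b /\ pspan2 a b (gamma k)) /\ v = gamma k).

Lemma ST k W : (forall v, Xs k.+1 v -> v <> 0) -> biclosed_in (Xs k) W ->
  biclosed_in (Xs k.+1) (NewW W k).
Proof.
move=> nz hW.
have nzk : forall v, Xs k v -> v <> 0 by move=> v /(Xs_mono (leqnSn k)) /nz.
case: (boolP (valid len k)) => vk; last first.
  apply: (biclosed_ext _ _ hW) => v.
    split; first by move=> h; apply/Xs_S; left.
    by case/Xs_S => // [[vk' _]]; move: vk; rewrite vk'.
  split; first by move=> h; left.
  by case=> // [[vk' _]]; move: vk; rewrite vk'.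
have ngk := Xs_new vk.
have Xk1 : Xs k.+1 (gamma k) by apply/Xs_S; right.
have gk0 : gamma k <> 0 by apply: nz.
have [[hWs hWc] [_ [_ hCc]]] := hW.
have hCbi := biclosed_compl hW.
have XsS1 : forall v, Xs k.+1 v -> v <> gamma k -> Xs k v.
  by move=> v /Xs_S [//|[_ ->]].
case: (classic (exists a b, W a /\ W b /\ pspan2 a b (gamma k))) => hP.
- have hii : forall c1 c2, Xs k c1 -> ~ W c1 -> Xs k c2 -> ~ W c2 ->
      pspan2 c1 c2 (gamma k) -> False.
    move=> c1 c2 X1 W1 X2 W2 hp; have [a [b [Wa [Wb hab]]]] := hP.
    exact: (CC hW Wa Wb X1 W1 X2 W2 (X_gamma vk) gk0 hab hp).
  apply: (biclosed_ext (Y := Xs k.+1) (B := fun v => W v \/ v = gamma k)) => //.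
    move=> v; split; first by case=> [h|->]; [left | right].
    by case=> [h|[_ [_ ->]]]; [left | right].
  split.
    split; first by move=> v [/hWs /(Xs_mono (leqnSn k))|->].
    move=> a b g Ba Bb Xg hp.
    case: (classic (g = gamma k)) => egk; first by right.
    have Xg' := XsS1 g Xg egk.
    case: (classic (W g)) => Wg; first by left.
    exfalso.
    case: Ba => [Wa|ea]; case: Bb => [Wb|eb].
    + by apply: Wg; apply: (hWc a b).
    + rewrite eb in hp.
      have [c1 [c2 [X1 [W1 [X2 [W2 hp']]]]]] := SW nzk hW vk Wa Xg' Wg (pspan2_sym hp).
      exact: (hii c1 c2).
    + rewrite ea in hp.
      have [c1 [c2 [X1 [W1 [X2 [W2 hp']]]]]] := SW nzk hW vk Wb Xg' Wg hp.
      exact: (hii c1 c2).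
    + rewrite ea eb in hp.
      exact: (hii g g Xg' Wg Xg' Wg (pspan2_back hp (nzk g Xg'))).
  split; first by move=> v [/hWs /(Xs_mono (leqnSn k))|->].
  split; first by move=> v [].
  move=> c1 c2 g [X1 B1] [X2 B2] Xg hp; split=> //.
  have X1' : Xs k c1 by apply: XsS1 => // e; apply: B1; right.
  have X2' : Xs k c2 by apply: XsS1 => // e; apply: B2; right.
  have W1 : ~ W c1 by move=> h; apply: B1; left.
  have W2 : ~ W c2 by move=> h; apply: B2; left.
  case=> [Wg|egk].
    by have [_] := hCc c1 c2 g (conj X1' W1) (conj X2' W2) (hWs g Wg) hp.
  by apply: (hii c1 c2 X1' W1 X2' W2); rewrite -egk.
- apply: (biclosed_ext (Y := Xs k.+1) (B := W)) => //.
    move=> v; split; first by move=> h; left.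
    by case=> // [[_ [hP' _]]]; exfalso; apply: hP.
  split.
    split; first by move=> v /hWs /(Xs_mono (leqnSn k)).
    move=> a b g Wa Wb Xg hp.
    case: (classic (g = gamma k)) => egk.
      by exfalso; apply: hP; exists a, b; rewrite -egk.
    exact: (hWc a b g Wa Wb (XsS1 g Xg egk) hp).
  split; first by move=> v /hWs /(Xs_mono (leqnSn k)).
  split; first by move=> v [].
  move=> c1 c2 g [X1 W1] [X2 W2] Xg hp; split=> //.
  move=> Wg.
  have Xg' := hWs g Wg.
  have nW' : ~ Defs.setDP (Xs k) W g by case.
  have back : forall e, Xs k e -> ~ Defs.setDP (Xs k) W e -> W e.
    by move=> e Xe h; apply: NNPP => nWe; apply: h.
  case: (classic (c1 = gamma k)) => e1; case: (classic (c2 = gamma k)) => e2.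
  + rewrite e1 e2 in hp.
    by apply: hP; exists g, g; split=> //; split=> //; apply: pspan2_back hp (nzk g Xg').
  + rewrite e1 in hp.
    have X2' := XsS1 c2 X2 e2.
    have [f1 [f2 [Y1 [N1 [Y2 [N2 hpf]]]]]] :=
      SW nzk hCbi vk (conj X2' W2 : Defs.setDP (Xs k) W c2) Xg' nW' hp.
    by apply: hP; exists f1, f2; split; [exact: back | split; [exact: back|]].
  + rewrite e2 in hp.
    have X1' := XsS1 c1 X1 e1.
    have [f1 [f2 [Y1 [N1 [Y2 [N2 hpf]]]]]] :=
      SW nzk hCbi vk (conj X1' W1 : Defs.setDP (Xs k) W c1) Xg' nW' (pspan2_sym hp).
    by apply: hP; exists f1, f2; split; [exact: back | split; [exact: back|]].
  + have X1' := XsS1 c1 X1 e1; have X2' := XsS1 c2 X2 e2.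
    by have [_] := hCc c1 c2 g (conj X1' W1) (conj X2' W2) Xg' hp.
Qed.
Fixpoint Wc (U : V -> Prop) (m d : nat) : V -> Prop :=
  match d with 0 => U | d'.+1 => NewW (Wc U m d') (m + d') end.

Lemma Wc_bicl U m d : biclosed_in (Xs m) U -> (forall v, Xs (m + d) v -> v <> 0) ->
  biclosed_in (Xs (m + d)) (Wc U m d).
Proof.
move=> hU; elim: d => [|d IH] nz; first by rewrite addn0.
rewrite /= addnS; apply: ST; first by rewrite -addnS.
apply: IH => v hv; apply: nz; apply: (Xs_mono _ hv); rewrite leq_add2l.
exact: leqnSn.
Qed.

Lemma Wc_le U m d d' v : (d <= d')%N -> Wc U m d v -> Wc U m d' v.
Proof.
elim: d' => [|d' IH]; first by rewrite leqn0 => /eqP ->.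
rewrite leq_eqVlt => /orP[/eqP -> //|]; rewrite ltnS => hd h.
by left; apply: IH.
Qed.

Lemma Wc_sub U m d v : (forall v, U v -> Xs m v) -> Wc U m d v -> Xs (m + d) v.
Proof.
move=> hU; elim: d v => [|d IH] v /=; first by rewrite addn0; apply: hU.
case=> [h|[vk [_ ->]]]; rewrite addnS; apply/Xs_S; [left; exact: IH | by right].
Qed.

Lemma Wc_restrict U m d v : (forall v, U v -> Xs m v) -> Wc U m d v -> Xs m v -> U v.
Proof.
move=> hU; elim: d => [|d IH] //=.
case=> [h|[vk [_ ev]]] hv; first exact: IH.
have : Xs m (gamma (m + d)) by rewrite -ev.
move/(Xs_gamma vk).
by rewrite -{2}(addn0 m) ltn_add2l ltn0.
Qed.

Lemma main_nozero U m : biclosed_in (Xs m) U -> (forall j, valid len j -> gamma j <> 0) ->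
  forall v, closure_in X U v -> Xs m v -> U v.
Proof.
move=> hU nz v hcl hv.
have hUs : forall v, U v -> Xs m v by move=> w Uw; apply: hU.1.1.
have [d hd] : exists d, Wc U m d v.
  apply: (hcl (fun v => exists d, Wc U m d v)); last by move=> u Uu; exists 0%N.
  split; first by move=> w [d hw]; apply: (Xs_X (Wc_sub hUs hw)).
  move=> a b g [d1 ha] [d2 hb] Xg hp.
  have [j [vj ej]] := X_idx Xg.
  set D := (d1 + d2 + j.+1)%N.
  have nzD : forall v, Xs (m + D) v -> v <> 0.
    by move=> w [j' [vj' [_ ->]]]; apply: nz.
  have [[_ hc] _] := Wc_bicl hU nzD.
  exists D; apply: (hc a b) => //.
  - by apply: (Wc_le _ ha); rewrite /D -addnA leq_addr.
  - by apply: (Wc_le _ hb); rewrite /D addnAC leq_addl.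
  - exists j; split=> //; split=> //.
    rewrite /D; lia.
exact: (Wc_restrict hUs hd hv).
Qed.
Definition Lt z v := exists j, valid len j /\ (z < j)%N /\ v = gamma j.

Lemma later_notXs z v : Lt z v -> ~ Xs z v.
Proof.
move=> [j [vj [hj ->]]] /(Xs_gamma vj) h.
by move: (ltn_trans h hj); rewrite ltnn.
Qed.

Lemma later_pos z Y al be g : valid len z -> gamma z = 0 -> Lt z g -> g <> 0 ->
  lin2_subset X Y -> fundamental Y al be -> Y g ->
  exists x y : R, 0 < x /\ 0 < y /\ g = x *: al + y *: be.
Proof.
move=> vz gz Lg g0 hY hF Yg.
have [Xal Xbe] := fund_before_zero vz gz hY hF.
apply: (fund_pos hF Yg g0) => e; apply: (later_notXs Lg); rewrite e //.
Qed.

Lemma plane_z z a b : valid len z -> gamma z = 0 -> X a -> X b -> b != 0 -> a \notin <[b]>%VS ->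
  exists al be, lin2_subset X (Pl a b) /\ fundamental (Pl a b) al be /\ Xs z al /\ Xs z be.
Proof.
move=> vz gz Xa Xb bn an.
have hY := Pl_lin2 Xa Xb (dim_lspan2 bn an).
have [al [be hF]] := has_fund hY.
have [h1 h2] := fund_before_zero vz gz hY hF.
by exists al, be.
Qed.

Lemma coordD (k : nat) (T : k.-tuple V) (i : 'I_k) (x y : R) a b :
  coord T i (x *: a + y *: b) = x * coord T i a + y * coord T i b.
Proof. by rewrite linearD !linearZ. Qed.

Lemma TB z g1 g2 : valid len z -> gamma z = 0 -> Lt z g1 -> Lt z g2 -> g1 <> 0 ->
  g2 \notin <[g1]>%VS -> forall q, X q -> q \in lspan2 g1 g2.
Proof.
move=> vz gz L1 L2 g10 g2n q Xq.
case: (boolP (q \in lspan2 g1 g2)) => // hq; exfalso.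
have g1n : g1 != 0 by apply/eqP.
have g20 : g2 != 0 by apply: contraNneq g2n => ->; exact: mem0v.
have [Xg1 Xg2] : X g1 /\ X g2 by case: L1 => [j1 [v1 [_ ->]]]; case: L2 => [j2 [v2 [_ ->]]]; split; apply: X_gamma.
pose T := [tuple q; g2; g1].
have hfree : free T.
  rewrite /= free_cons span_cons span_seq1 free_cons span_seq1 seq1_free g1n andbT.
  rewrite -/(lspan2 g2 g1) -lspan2C hq /=.
  exact: g2n.
pose h := coord T 0; pose t := coord T 1.
have hq1 : h q = 1 by have := coord_free (0 : 'I_3) (0 : 'I_3) hfree.
have hg2 : h g2 = 0 by have := coord_free (1 : 'I_3) (0 : 'I_3) hfree.
have hg1 : h g1 = 0 by have := coord_free (2 : 'I_3) (0 : 'I_3) hfree.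
have tg2 : t g2 = 1 by have := coord_free (1 : 'I_3) (1 : 'I_3) hfree.
have tg1 : t g1 = 0 by have := coord_free (2 : 'I_3) (1 : 'I_3) hfree.
have hline : forall v w, h w = 0 -> v \in <[w]>%VS -> h v = 0.
  by move=> v w hw /vlineP [mu ->]; rewrite /h linearZ /= -/h hw mulr0.
have [p0 [Xp0 hp0]] : exists p0, Xs z p0 /\ 0 < h p0.
  have qn : q \notin <[g1]>%VS.
    apply: contra hq => /vlineP [mu ->].
    by have := lin_lspan2 g1 g2 mu 0; rewrite scale0r addr0.
  have [al [be [hY [hF [Xal Xbe]]]]] := plane_z vz gz Xq Xg1 g1n qn.
  have Yg1 : Pl q g1 g1 by split=> //; apply: in_lspan2_r.
  have Yq : Pl q g1 q by split=> //; apply: in_lspan2_l.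
  have [x [y [hx [hy eg1]]]] := later_pos vz gz L1 g10 hY hF Yg1.
  have [_ [_ [hsub _]]] := hF.
  have [x' [y' [_ [_ eq']]]] := hsub q Yq.
  have e0 : x * h al + y * h be = 0 by rewrite -coordD -eg1.
  have e1 : x' * h al + y' * h be = 1 by rewrite -coordD -eq'.
  have nz : (h al != 0) || (h be != 0).
    rewrite -negb_and; apply/negP => /andP [/eqP a0 /eqP b0].
    by move: e1; rewrite a0 b0 !mulr0 addr0 => /eqP; rewrite eq_sym oner_eq0.
  case: (sign_pos hx hy e0 nz) => hpos; [by exists al | by exists be].
pose f := fun j => t (gamma j) / h (gamma j).
pose s := [seq j <- iota 0 z | valid len j && (0 < h (gamma j))].
have ins : forall j, (j \in s) = [&& valid len j, 0 < h (gamma j) & (j < z)%N].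
  by move=> j; rewrite mem_filter mem_iota add0n /= andbA.
have [jm jms hmin] : exists2 j, j \in s & forall j', j' \in s -> f j <= f j'.
  apply: exists_min; have [j0 [vj0 [hj0 ep0]]] := Xp0.
  apply/eqP => s0; have : j0 \in s by rewrite ins vj0 -ep0 hp0 hj0.
  by rewrite s0.
move: (jms); rewrite ins => /and3P [vjm hpm jmz].
set p := gamma jm.
have Xp : Xs z p by exists jm.
have pn : p \notin <[g2]>%VS.
  by apply/negP => /(hline p g2 hg2) e; move: hpm; rewrite e ltxx.
have [al [be [hY [hF [Xal Xbe]]]]] := plane_z vz gz (Xs_X Xp) Xg2 g20 pn.
have Yg2 : Pl p g2 g2 by split=> //; apply: in_lspan2_r.
have Yp : Pl p g2 p by split; [exact: Xs_X Xp | apply: in_lspan2_l].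
have [a' [b' [ha' [hb' eg2]]]] := later_pos vz gz L2 (fun e => negP g20 (introT eqP e)) hY hF Yg2.
have [_ [_ [hsub _]]] := hF.
have [x [y [hx [hy ep]]]] := hsub p Yp.
have e0 : 0 = a' * h al + b' * h be by rewrite -coordD -eg2.
have e1 : 1 = a' * t al + b' * t be by rewrite -coordD -eg2.
have ehp : h p = x * h al + y * h be by rewrite {1}ep /h /t coordD.
have etp : t p = x * t al + y * t be by rewrite {1}ep /h /t coordD.
have [r [Xr [hr0 key]]] : exists r, Xs z r /\ h r < 0 /\ 0 < t r * h p - t p * h r.
  have nz : (- h al != 0) || (- h be != 0).
    rewrite -negb_and; apply/negP => /andP [/eqP a0 /eqP b0].
    move: hpm; rewrite -/p ehp.
    have -> : h al = 0 by apply/eqP; rewrite -oppr_eq0 a0.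
    have -> : h be = 0 by apply/eqP; rewrite -oppr_eq0 b0.
    by rewrite !mulr0 addr0 ltxx.
  have e0' : a' * (- h al) + b' * (- h be) = 0 by rewrite !mulrN -opprD -e0 oppr0.
  case: (sign_pos ha' hb' e0' nz) => hneg.
    exists al; split=> //; split; first by rewrite -oppr_gt0.
    apply: (real1 ha' hb' hx hy _ e0 e1 ehp etp hpm); by rewrite -oppr_gt0.
  exists be; split=> //; split; first by rewrite -oppr_gt0.
  apply: (real1 (ho := h al) (to := t al) hb' ha' hy hx _ _ _ _ _ hpm); first by rewrite -oppr_gt0.
  - by rewrite addrC -e0.
  - by rewrite addrC -e1.
  - by rewrite addrC -ehp.
  - by rewrite addrC -etp.
have rn : r \notin <[g1]>%VS.
  by apply/negP => /(hline r g1 hg1) e; move: hr0; rewrite e ltxx.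
have [al2 [be2 [hY2 [hF2 [Xal2 Xbe2]]]]] := plane_z vz gz (Xs_X Xr) Xg1 g1n rn.
have Yg1 : Pl r g1 g1 by split=> //; apply: in_lspan2_r.
have Yr : Pl r g1 r by split; [exact: Xs_X Xr | apply: in_lspan2_l].
have [x2 [y2 [hx2 [hy2 eg1]]]] := later_pos vz gz L1 g10 hY2 hF2 Yg1.
have [Yal2 [Ybe2 [hsub2 _]]] := hF2.
have [x3 [y3 [_ [_ er]]]] := hsub2 r Yr.
have e2 : x2 * h al2 + y2 * h be2 = 0 by rewrite -coordD -eg1.
have e3 : h r = x3 * h al2 + y3 * h be2 by rewrite {1}er /h coordD.
have nz2 : (h al2 != 0) || (h be2 != 0).
  rewrite -negb_and; apply/negP => /andP [/eqP a0 /eqP b0].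
  by move: hr0; rewrite e3 a0 b0 !mulr0 addr0 ltxx.
have fin : forall p2, Xs z p2 -> 0 < h p2 -> Pl r g1 p2 -> False.
  move=> p2 [j2 [vj2 [hj2 ep2]]] hp2 [_ hl].
  have j2s : j2 \in s by rewrite ins vj2 -ep2 hp2 hj2.
  have := hmin j2 j2s; rewrite /f -ep2 -/p.
  have [mu [nu ep2']] := lspan2_coords hl.
  have eh : h p2 = mu * h r by rewrite ep2' /h coordD -/h hg1 mulr0 addr0.
  have et : t p2 = mu * t r by rewrite ep2' /t coordD -/t tg1 mulr0 addr0.
  have mun : mu != 0 by apply/eqP => m0; move: hp2; rewrite eh m0 mul0r ltxx.
  rewrite eh et -mulf_div divff // mul1r => hle.
  have := real2 hpm hr0 hle; lra.
case: (sign_pos hx2 hy2 e2 nz2) => hpos.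
  exact: (fin al2 Xal2 hpos Yal2).
exact: (fin be2 Xbe2 hpos Ybe2).
Qed.
Definition RANK2 := exists a0 b0 : V, forall v, X v -> v \in lspan2 a0 b0.

Lemma later_nz z v : valid len z -> gamma z = 0 -> Lt z v -> v <> 0.
Proof.
move=> vz gz [j [vj [hj ->]]] e.
have := gamma_inj vj vz (etrans e (esym gz)) => ejz.
by move: hj; rewrite ejz ltnn.
Qed.

Lemma Xs_nz z v : valid len z -> gamma z = 0 -> Xs z v -> v <> 0.
Proof.
move=> vz gz [j [vj [hj ->]]] e.
have := gamma_inj vj vz (etrans e (esym gz)) => ejz.
by move: hj; rewrite ejz ltnn.
Qed.

Lemma Lt_X z v : Lt z v -> X v.
Proof. by case=> j [vj [_ ->]]; exists j. Qed.

Lemma POS z g1 g2 : valid len z -> gamma z = 0 -> ~ RANK2 -> Lt z g1 -> Lt z g2 ->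
  exists l, 0 < l /\ g2 = l *: g1.
Proof.
move=> vz gz nR L1 L2.
have g10 := later_nz vz gz L1; have g20 := later_nz vz gz L2.
case: (boolP (g2 \in <[g1]>%VS)) => hin; last first.
  by exfalso; apply: nR; exists g1, g2; apply: (TB vz gz L1 L2 g10 hin).
have [l el] := vlineP _ _ hin.
case: (ltrP 0 l) => hl; first by exists l.
exfalso.
have [w [Xw hw]] : exists w, X w /\ w \notin lspan2 g1 g1.
  apply: NNPP => h; apply: nR; exists g1, g1 => v Xv.
  apply: NNPP => hv; apply: h; exists v; split=> //; exact/negP.
have g1n : g1 != 0 by apply/eqP.
have wn : w \notin <[g1]>%VS.
  apply: contra hw => /vlineP [mu ->].
  by have := lin_lspan2 g1 g1 mu 0; rewrite scale0r addr0.
have [al [be [hY [hF _]]]] := plane_z vz gz Xw (Lt_X L1) g1n wn.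
have [_ [_ [hsub _]]] := hF.
have Y1 : Pl w g1 g1 by split; [exact: Lt_X L1 | exact: in_lspan2_r].
have Y2 : Pl w g1 g2.
  split; first exact: Lt_X L2.
  by have := lin_lspan2 w g1 0 l; rewrite scale0r add0r -el.
have [a1 [a2 [ha1 [ha2 e1]]]] := hsub _ Y1.
have [b1 [b2 [hb1 [hb2 e2]]]] := hsub _ Y2.
have hrel : (1 * b1 + (- l) * a1) *: al + (1 * b2 + (- l) * a2) *: be = 0.
  by rewrite -lcE -e1 -e2 scale1r el scaleNr subrr.
have ln : 0 <= - l by rewrite oppr_ge0.
have [c1 c2] := pointed hY hF (addr_ge0 (mulr_ge0 ler01 hb1) (mulr_ge0 ln ha1))
  (addr_ge0 (mulr_ge0 ler01 hb2) (mulr_ge0 ln ha2)) hrel.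
have l0 : l != 0 by apply/eqP => l0; apply: g20; rewrite el l0 scale0r.
have lneg : l < 0 by rewrite lt_neqAle l0 hl.
have a10 : a1 = 0.
  have : 0 <= - l * a1 by apply: mulr_ge0.
  move: c1; rewrite mul1r => c1.
  have : - l * a1 <= 0 by lra.
  move=> h1 h2; have : - l * a1 = 0 by lra.
  by move/eqP; rewrite mulf_eq0 oppr_eq0 (negbTE l0) /= => /eqP.
have a20 : a2 = 0.
  have : 0 <= - l * a2 by apply: mulr_ge0.
  move: c2; rewrite mul1r => c2.
  have : - l * a2 <= 0 by lra.
  move=> h1 h2; have : - l * a2 = 0 by lra.
  by move/eqP; rewrite mulf_eq0 oppr_eq0 (negbTE l0) /= => /eqP.
by apply: g10; rewrite e1 a10 a20 !scale0r addr0.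
Qed.

Lemma ray_l a g : pspan2 a 0 g -> exists c, 0 <= c /\ g = c *: a.
Proof. by case=> c [d [hc [hd ->]]]; exists c; rewrite scaler0 addr0. Qed.

Lemma KEY z W0 a b g u1 u2 : valid len z -> gamma z = 0 -> biclosed_in (Xs z) W0 ->
  Lt z a -> W0 u1 -> W0 u2 -> pspan2 u1 u2 a -> W0 b -> Xs z g -> ~ W0 g ->
  pspan2 a b g -> False.
Proof.
move=> vz gz hW La Wu1 Wu2 hu Wb Xg nWg hab.
have [[hWs hWc] _] := hW.
have a0 := later_nz vz gz La.
have Xb := hWs b Wb.
have b0 := Xs_nz vz gz Xb.
have g0 := Xs_nz vz gz Xg.
have bn : b != 0 by apply/eqP.
case: (boolP (a \in <[b]>%VS)) => ha.
  have [l el] := vlineP _ _ ha.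
  have [c [d [hc [hd eg]]]] := hab.
  set K := c * l + d.
  have egK : g = K *: b by rewrite eg el scalerA -scalerDl.
  case: (lerP 0 K) => hK.
    by apply: nWg; apply: (hWc b b g Wb Wb Xg); rewrite egK; apply: pspan2_l.
  have lneg : l < 0.
    rewrite ltNge; apply/negP => hl.
    have : 0 <= c * l by apply: mulr_ge0.
    by rewrite /K in hK; lra.
  have Kn : K != 0 by rewrite ltr0_neq0.
  apply: (CC hW Wu1 Wu2 Xg nWg Xg nWg (Lt_X La) a0 hu).
  have -> : a = (l / K) *: g by rewrite egK scalerA mulfVK.
  apply: pspan2_l; apply: mulr_le0; [exact: ltW | rewrite invr_le0; exact: ltW].
have [al [be [hY [hF [Xal Xbe]]]]] := plane_z vz gz (Lt_X La) (Xs_X Xb) bn ha.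
have [_ [_ [hsub _]]] := hF.
have Ya : Pl a b a by split; [exact: Lt_X La | exact: in_lspan2_l].
have Yb : Pl a b b by split; [exact: Xs_X Xb | exact: in_lspan2_r].
case: (twoD (hsub _ Ya) (hsub _ Yb) hab b0 g0) => [[h1 h2]|[h1 h2]].
  case: (classic (W0 al)) => Wal; first by apply: nWg; apply: (hWc al b g).
  exact: (CC hW Wu1 Wu2 Xal Wal Xg nWg (Lt_X La) a0 hu h2).
case: (classic (W0 be)) => Wbe; first by apply: nWg; apply: (hWc be b g).
exact: (CC hW Wu1 Wu2 Xbe Wbe Xg nWg (Lt_X La) a0 hu h2).
Qed.
Definition CB z W0 := fun v => W0 v \/ v = 0 \/
  (Lt z v /\ exists u1 u2, W0 u1 /\ W0 u2 /\ pspan2 u1 u2 v).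

Lemma CB_closed z W0 : valid len z -> gamma z = 0 -> ~ RANK2 -> biclosed_in (Xs z) W0 ->
  closed_in X (CB z W0).
Proof.
move=> vz gz nR hW.
have [[hWs hWc] _] := hW.
split.
  move=> v [h|[->|[[j [vj [_ ->]]] _]]]; first exact: Xs_X (hWs v h).
    by rewrite -gz; apply: X_gamma.
  exact: X_gamma.
move=> a b g Ca Cb Xg hp.
have [j [vj ej]] := X_idx Xg.
have latscale : forall a' k, Lt z a' -> (exists u1 u2, W0 u1 /\ W0 u2 /\ pspan2 u1 u2 a') ->
    0 <= k -> exists u1 u2, W0 u1 /\ W0 u2 /\ pspan2 u1 u2 (k *: a').
  move=> a' k _ [u1 [u2 [W1 [W2 hu]]]] hk; exists u1, u2; split=> //; split=> //.
  exact: pspan2_scale.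
case: (ltngtP j z) => hjz.
-
  have Xgz : Xs z g by exists j.
  left; apply: NNPP => nWg.
  have g0 := Xs_nz vz gz Xgz.
  have fromrep : (exists u1 u2, W0 u1 /\ W0 u2 /\ pspan2 u1 u2 g) -> False.
    by move=> [u1 [u2 [W1 [W2 hu]]]]; apply: nWg; apply: (hWc u1 u2).
  case: Ca => [Wa|[a0|[La ra]]]; case: Cb => [Wb|[b0|[Lb rb]]].
  + by apply: nWg; apply: (hWc a b).
  + rewrite b0 in hp; have [c [hc eg]] := ray_l hp.
    by apply: nWg; apply: (hWc a a); rewrite // eg; apply: pspan2_l.
  + have [u1 [u2 [W1 [W2 hu]]]] := rb.
    exact: (KEY vz gz hW Lb W1 W2 hu Wa Xgz nWg (pspan2_sym hp)).
  + rewrite a0 in hp; have [d [hd eg]] := ray_l (pspan2_sym hp).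
    by apply: nWg; apply: (hWc b b); rewrite // eg; apply: pspan2_l.
  + by apply: g0; move: hp; rewrite a0 b0 => /ray_l [c [_ ->]]; rewrite scaler0.
  + rewrite a0 in hp; have [d [hd eg]] := ray_l (pspan2_sym hp).
    by apply: fromrep; rewrite eg; apply: latscale.
  + have [u1 [u2 [W1 [W2 hu]]]] := ra.
    exact: (KEY vz gz hW La W1 W2 hu Wb Xgz nWg hp).
  + rewrite b0 in hp; have [c [hc eg]] := ray_l hp.
    by apply: fromrep; rewrite eg; apply: latscale.
  + have [l [hl el]] := POS vz gz nR La Lb.
    have [c [d [hc [hd eg]]]] := hp.
    apply: fromrep; rewrite eg el scalerA -scalerDl; apply: latscale => //.
    by apply: addr_ge0 => //; apply: mulr_ge0 => //; apply: ltW.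
-
  have Lg : Lt z g by exists j.
  right; right; split=> //.
  case: Ca => [Wa|[a0|[La ra]]].
  + case: Cb => [Wb|[b0|[Lb rb]]].
    * by exists a, b.
    * rewrite b0 in hp; have [c [hc eg]] := ray_l hp.
      by exists a, a; split=> //; split=> //; rewrite eg; apply: pspan2_l.
    * have [l [hl el]] := POS vz gz nR Lb Lg.
      by rewrite el; apply: latscale => //; apply: ltW.
  + case: Cb => [Wb|[b0|[Lb rb]]].
    * rewrite a0 in hp; have [d [hd eg]] := ray_l (pspan2_sym hp).
      by exists b, b; split=> //; split=> //; rewrite eg; apply: pspan2_l.
    * exfalso; apply: (later_nz vz gz Lg).
      by move: hp; rewrite a0 b0 => /ray_l [c [_ ->]]; rewrite scaler0.
    * have [l [hl el]] := POS vz gz nR Lb Lg.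
      by rewrite el; apply: latscale => //; apply: ltW.
  + have [l [hl el]] := POS vz gz nR La Lg.
    by rewrite el; apply: latscale => //; apply: ltW.
- by right; left; rewrite ej hjz.
Qed.

Lemma main_lemma m U : biclosed_in (Xs m) U ->
  forall v, (closure_in X U v /\ Xs m v) <-> U v.
Proof.
move=> hU v; have hUs : forall v, U v -> Xs m v by move=> w Uw; apply: hU.1.1.
split; last first.
  by move=> Uv; split; [move=> C _ hC; apply: hC | apply: hUs].
case=> hcl hv.
case: (classic (exists z, valid len z /\ gamma z = 0)) => [[z [vz gz]]|nz]; last first.
  apply: (main_nozero hU _ hcl hv) => j vj e; apply: nz; exists j; split=> //.
case: (ltnP z m) => hzm.
  have X0 : Xs m 0 by exists z.
  case: (classic (exists u0, U u0)) => [[u0 Uu0]|hne]; last first.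
    exfalso; apply: (hcl (fun _ => False)) => //.
      by split=> //.
    by move=> u Uu; apply: hne; exists u.
  have [[_ hUc] [_ [_ hCc]]] := hU.
  have U0 : U 0 by apply: (hUc u0 u0) => //; apply: pspan2_0.
  apply: NNPP => nUv.
  have [_ h] := hCc v v 0 (conj hv nUv) (conj hv nUv) X0 (pspan2_0 v v).
  exact: h.
case: (classic RANK2) => [[a0 [b0 hR]]|nR].
  exact: (rank2_main hR (fun w => @Xs_X m w) hU.1 hcl hv).
set d0 := (z - m)%N.
have ez : (m + d0)%N = z by rewrite /d0 subnKC.
have nzz : forall w, Xs (m + d0) w -> w <> 0 by rewrite ez; move=> w; apply: Xs_nz.
have hW0 := Wc_bicl hU nzz; rewrite ez in hW0.
have hC := CB_closed vz gz nR hW0.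
have : CB z (Wc U m d0) v.
  apply: (hcl _ hC) => u Uu; left; apply: (Wc_le (d := 0%N)) => //.
case=> [h|[v0|[Lv _]]].
- exact: (Wc_restrict hUs h hv).
- exfalso; apply: (Xs_nz vz gz (Xs_mono hzm hv)); exact: v0.
- by exfalso; apply: (later_notXs Lv); apply: (Xs_mono hzm hv).
Qed.
End Main.

Theorem proposition3p2 (R : realType) (n : nat)
  (gamma : nat -> 'rV[R]_n) (len : option nat)
  (gamma_inj : forall i j, valid len i -> valid len j -> gamma i = gamma j -> i = j)
  (has_fund : forall Y, lin2_subset (Xset gamma len) Y -> exists a b, fundamental Y a b)
  (suit : suitable gamma len)
  (m : nat) (U : 'rV[R]_n -> Prop)
  (hU : biclosed_in (Xseg gamma len m) U) :
  forall v, (closure_in (Xset gamma len) U v /\ Xseg gamma len m v) <-> U v.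
Proof. exact: (main_lemma gamma_inj has_fund suit hU). Qed.
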